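(* Let $\xi=\xi_{\{\mu\}}$ be a GCKV on $\mathbb{E}^2$, not identically zero, with parameters $\mu=(\mu_0,\mu_1,\mu_2)$ in the coordinates $\{z,\bar z\}$. Let $U\subset\mathbb{R}^4\setminus\{0\}$ be the set of $u$ such that $\xi$ is a Killing vector of the metric $g_u$. Then: - If $2\mu_0\mu_2-\mu_1^2\notin\mathbb{R}$, then $U=\emptyset$. - If $2\mu_0\mu_2-\mu_1^2\in\mathbb{R}$, let $\gamma,\delta\in\mathbb{C}$ be any pair with $\frac12\delta^2\mu_2-\gamma\delta\mu_1+\gamma^2\mu_0=1$, set $\alpha=\frac12(\delta\mu_2-\gamma\mu_1)$, $\beta=\frac12\delta\mu_1-\gamma\mu_0$ and $\mathbb{A}=\begin{pmatrix}\alpha&\beta\\ \gamma&\delta\end{pmatrix}$. Then $u\in U$ if and only if $$(u_0,u_1,u_2,u_3)^T=\mathcal{O}(\mathbb{A})^T\Big(s_1\big(\tfrac14(2\mu_0\mu_2-\mu_1^2)+1\big),\ s_1\big(\tfrac14(2\mu_0\mu_2-\mu_1^2)-1\big),\ 0,\ s_2\Big)^T$$ for some $(s_1,s_2)\in\mathbb{R}^2\setminus\{0\}$. Moreover, such $g_u$ has constant Gauss curvature $s_1^2(2\mu_0\mu_2-\mu_1^2)-s_2^2$.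
   Context: $\mathbb{E}^2$ has Cartesian coordinates $\{x,y\}$, $z=\frac12(x-iy)$. A GCKV with parameters $\mu\in\mathbb{C}^3$ is $\xi_{\{\mu\}}=(\mu_0+\mu_1z+\frac12\mu_2z^2)\partial_z+(\bar\mu_0+\bar\mu_1\bar z+\frac12\bar\mu_2\bar z^2)\partial_{\bar z}$. For $u=(u_0,u_1,u_2,u_3)\in\mathbb{R}^4\setminus\{0\}$, $g_u:=\Omega_u^{-2}(dx^2+dy^2)$ with $\Omega_u=u_0+u_1+u_2x+u_3y+\frac14(u_0-u_1)(x^2+y^2)$ (on the set where $\Omega_u\ne0$). For $\mathbb{A}\in SL(2,\mathbb{C})$, $\mathcal{O}(\mathbb{A})=\frac12M$ where the rows of $M$ are: row 0: $\big(\alpha\bar\alpha+\beta\bar\beta+\gamma\bar\gamma+\delta\bar\delta,\ -\alpha\bar\alpha+\beta\bar\beta-\gamma\bar\gamma+\delta\bar\delta,\ \alpha\bar\beta+\beta\bar\alpha+\gamma\bar\delta+\delta\bar\gamma,\ i(-\alpha\bar\beta+\beta\bar\alpha-\gamma\bar\delta+\delta\bar\gamma)\big)$; row 1: $\big(-\alpha\bar\alpha-\beta\bar\beta+\gamma\bar\gamma+\delta\bar\delta,\ \alpha\bar\alpha-\beta\bar\beta-\gamma\bar\gamma+\delta\bar\delta,\ -\alpha\bar\beta-\beta\bar\alpha+\gamma\bar\delta+\delta\bar\gamma,\ i(\alpha\bar\beta-\beta\bar\alpha-\gamma\bar\delta+\delta\bar\gamma)\big)$; row 2: $\big(\alpha\bar\gamma+\beta\bar\delta+\gamma\bar\alpha+\delta\bar\beta,\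 -\alpha\bar\gamma+\beta\bar\delta-\gamma\bar\alpha+\delta\bar\beta,\ \alpha\bar\delta+\beta\bar\gamma+\gamma\bar\beta+\delta\bar\alpha,\ i(-\alpha\bar\delta+\beta\bar\gamma-\gamma\bar\beta+\delta\bar\alpha)\big)$; row 3: $\big(i(\alpha\bar\gamma+\beta\bar\delta-\gamma\bar\alpha-\delta\bar\beta),\ i(-\alpha\bar\gamma+\beta\bar\delta+\gamma\bar\alpha-\delta\bar\beta),\ i(\alpha\bar\delta+\beta\bar\gamma-\gamma\bar\beta-\delta\bar\alpha),\ \alpha\bar\delta-\beta\bar\gamma-\gamma\bar\beta+\delta\bar\alpha\big)$. *)

(* Defs.v *)
From Stdlib Require Import Reals.
From Coquelicot Require Import Coquelicot.
Open Scope R_scope.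

Definition d_x (f : R -> R -> R) (x y : R) : R := Derive (fun t => f t y) x.
Definition d_y (f : R -> R -> R) (x y : R) : R := Derive (fun t => f x t) y.
Definition pd (k : nat) (f : R -> R -> R) : R -> R -> R :=
  match k with O => d_x f | _ => d_y f end.

(** A vector field on (an open subset of) E^2: its components X 0 = X^x, X 1 = X^y. *)
Definition vfield := nat -> R -> R -> R.
Definition metric := nat -> nat -> R -> R -> R.

Definition lie_metric (X : vfield) (g : metric) (i j : nat) (x y : R) : R :=
  let term k := X k x y * pd k (g i j) x y
                + g k j x y * pd i (X k) x y
                + g i k x y * pd j (X k) x y in
  term 0%nat + term 1%nat.

Definition is_killing (X : vfield) (g : metric) (D : R -> R -> Prop) : Prop :=
  forall x y, D x y -> forall i j : nat, (i < 2)%nat -> (j < 2)%nat ->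
    lie_metric X g i j x y = 0.

(** Gauss curvature of g = E dx^2 + 2F dx dy + G dy^2 (Brioschi formula). *)
Definition gauss_curvature (g : metric) (x y : R) : R :=
  let E := g 0%nat 0%nat in let F := g 0%nat 1%nat in let G := g 1%nat 1%nat in
  let Eu := d_x E x y in let Ev := d_y E x y in
  let Fu := d_x F x y in let Fv := d_y F x y in
  let Gu := d_x G x y in let Gv := d_y G x y in
  let Evv := d_y (d_y E) x y in let Fuv := d_y (d_x F) x y in
  let Guu := d_x (d_x G) x y in
  let e := E x y in let f := F x y in let gg := G x y in
  let det3 a11 a12 a13 a21 a22 a23 a31 a32 a33 :=
    a11 * (a22 * a33 - a23 * a32) - a12 * (a21 * a33 - a23 * a31)
    + a13 * (a21 * a32 - a22 * a31) in
  (det3 (- Evv / 2 + Fuv - Guu / 2) (Eu / 2) (Fu - Ev / 2)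
        (Fv - Gu / 2) e f
        (Gv / 2) f gg
   - det3 0 (Ev / 2) (Gu / 2)
          (Ev / 2) e f
          (Gu / 2) f gg) / (e * gg - f * f) ^ 2.

Definition conf_metric (lam : R -> R -> R) : metric :=
  fun i j x y => if Nat.eqb i j then lam x y else 0.

Definition Omega (u0 u1 u2 u3 : R) (x y : R) : R :=
  u0 + u1 + u2 * x + u3 * y + / 4 * (u0 - u1) * (x ^ 2 + y ^ 2).
Definition g_u (u0 u1 u2 u3 : R) : metric :=
  conf_metric (fun x y => / (Omega u0 u1 u2 u3 x y) ^ 2).
Definition dom_u (u0 u1 u2 u3 : R) : R -> R -> Prop :=
  fun x y => Omega u0 u1 u2 u3 x y <> 0.

Definition zc (x y : R) : C := (x / 2, - y / 2)%R.

(** GCKV xi_{mu} = f(z) d_z + conj(f(z)) d_zbar, f(z) = mu0 + mu1 z + mu2 z^2/2.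
    Since x = z + zbar, y = i (z - zbar), d_z = d_x + i d_y and d_zbar = d_x - i d_y,
    so xi = 2 Re f d_x - 2 Im f d_y; these are its real Cartesian components. *)
Definition gckv_f (mu0 mu1 mu2 : C) (x y : R) : C :=
  (mu0 + mu1 * zc x y + / 2 * mu2 * (zc x y * zc x y))%C.
Definition gckv (mu0 mu1 mu2 : C) : vfield :=
  fun k x y => match k with
               | O => 2 * Re (gckv_f mu0 mu1 mu2 x y)
               | _ => - 2 * Im (gckv_f mu0 mu1 mu2 x y)
               end.

Definition OA (a b c d : C) (i j : nat) : C :=
  let cj := Cconj in
  (/ 2 * match i, j with
  | 0, 0 => a * cj a + b * cj b + c * cj c + d * cj d
  | 0, 1 => - (a * cj a) + b * cj b - c * cj c + d * cj d
  | 0, 2 => a * cj b + b * cj a + c * cj d + d * cj c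
  | 0, 3 => Ci * (- (a * cj b) + b * cj a - c * cj d + d * cj c)
  | 1, 0 => - (a * cj a) - b * cj b + c * cj c + d * cj d
  | 1, 1 => a * cj a - b * cj b - c * cj c + d * cj d
  | 1, 2 => - (a * cj b) - b * cj a + c * cj d + d * cj c
  | 1, 3 => Ci * (a * cj b - b * cj a - c * cj d + d * cj c)
  | 2, 0 => a * cj c + b * cj d + c * cj a + d * cj b
  | 2, 1 => - (a * cj c) + b * cj d - c * cj a + d * cj b
  | 2, 2 => a * cj d + b * cj c + c * cj b + d * cj a
  | 2, 3 => Ci * (- (a * cj d) + b * cj c - c * cj b + d * cj a)
  | 3, 0 => Ci * (a * cj c + b * cj d - c * cj a - d * cj b)
  | 3, 1 => Ci * (- (a * cj c) + b * cj d + c * cj a - d * cj b)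
  | 3, 2 => Ci * (a * cj d + b * cj c - c * cj b - d * cj a)
  | 3, 3 => a * cj d - b * cj c - c * cj b + d * cj a
  | _, _ => 0
  end)%C.

Definition OAT_apply (a b c d : C) (v : nat -> C) (i : nat) : C :=
  (OA a b c d 0 i * v 0%nat + OA a b c d 1 i * v 1%nat
   + OA a b c d 2 i * v 2%nat + OA a b c d 3 i * v 3%nat)%C.

(* Main.v *)
Require Import Defs.
From Stdlib Require Import Reals Lra Lia.
From Coquelicot Require Import Coquelicot.
Open Scope R_scope.


Lemma nz_nbhd (f : R -> R) x : continuity_pt f x -> f x <> 0 ->
  exists eps, eps > 0 /\ forall t, Rabs (t - x) < eps -> f t <> 0.
Proof.
  intros Hc Hf. destruct (Hc (Rabs (f x)) (Rabs_pos_lt _ Hf)) as [alp [Ha Hb]].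
  exists alp. split; auto. intros t Ht Hft.
  destruct (Req_dec t x) as [->|Hne]; [auto|].
  assert (Hd : R_dist (f t) (f x) < Rabs (f x)).
  { apply Hb. split; [split; [exact I| auto]| exact Ht]. }
  unfold R_dist in Hd. rewrite Hft in Hd. rewrite Rminus_0_l, Rabs_Ropp in Hd. lra.
Qed.

Lemma quad3 A B C p d : d <> 0 -> A*p^2+B*p+C = 0 -> A*(p+d)^2+B*(p+d)+C=0 ->
  A*(p-d)^2+B*(p-d)+C = 0 -> A = 0 /\ B = 0 /\ C = 0.
Proof.
  intros Hd H1 H2 H3.
  assert (HA : A * (2 * (d*d)) = 0) by lra.
  assert (Hdd : 2*(d*d) <> 0). { apply Rmult_integral_contrapositive; split; [lra|].
    apply Rmult_integral_contrapositive; auto. }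
  assert (A = 0). { apply Rmult_integral in HA. destruct HA; auto. contradiction. }
  subst A. assert (HB : B * (2*d) = 0) by lra.
  assert (B = 0). { apply Rmult_integral in HB. destruct HB; auto. lra. }
  subst B. lra.
Qed.

Lemma cont_x u0 u1 u2 u3 x y : continuity_pt (fun t => Omega u0 u1 u2 u3 t y) x.
Proof. unfold Omega. reg. Qed.
Lemma cont_y u0 u1 u2 u3 x y : continuity_pt (fun t => Omega u0 u1 u2 u3 x t) y.
Proof. unfold Omega. reg. Qed.

Definition e0f (a0 b0 a1 b1 a2 b2 u0 u1 u2 u3 : R) := 2*a0*u2 - a1*(u0+u1) - 2*b0*u3.
Definition e1f (a0 b0 a1 b1 a2 b2 u0 u1 u2 u3 : R) := a0*(u0-u1) - /2*a2*(u0+u1) - b1*u3.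
Definition e2f (a0 b0 a1 b1 a2 b2 u0 u1 u2 u3 : R) := -b0*(u0-u1) + b1*u2 - /2*b2*(u0+u1).
Definition e3f (a0 b0 a1 b1 a2 b2 u0 u1 u2 u3 : R) := /4*a1*(u0-u1) - /4*a2*u2 - /4*b2*u3.
Definition Pf (a0 b0 a1 b1 a2 b2 u0 u1 u2 u3 x y : R) :=
  e0f a0 b0 a1 b1 a2 b2 u0 u1 u2 u3 + e1f a0 b0 a1 b1 a2 b2 u0 u1 u2 u3*x
  + e2f a0 b0 a1 b1 a2 b2 u0 u1 u2 u3*y + e3f a0 b0 a1 b1 a2 b2 u0 u1 u2 u3*(x^2+y^2).

Section Ana.
Variables a0 b0 a1 b1 a2 b2 u0 u1 u2 u3 : R.

Definition X0f x y := 2*a0 + a1*x + b1*y + a2*(x^2-y^2)/4 + b2*x*y/2.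
Definition X1f x y := -2*b0 - b1*x + a1*y - b2*(x^2-y^2)/4 + a2*x*y/2.

Lemma gckv0 x y : gckv (a0,b0) (a1,b1) (a2,b2) 0%nat x y = X0f x y.
Proof. unfold gckv, gckv_f, zc, X0f. simpl. field. Qed.
Lemma gckv1 x y : gckv (a0,b0) (a1,b1) (a2,b2) 1%nat x y = X1f x y.
Proof. unfold gckv, gckv_f, zc, X1f. simpl. field. Qed.

Lemma dX0x x y : d_x (gckv (a0,b0) (a1,b1) (a2,b2) 0%nat) x y = a1 + a2*x/2 + b2*y/2.
Proof.
  unfold d_x. rewrite (Derive_ext _ (fun t => X0f t y)) by (intro; apply gckv0).
  apply is_derive_unique. unfold X0f. auto_derive; auto. field.
Qed.
Lemma dX0y x y : d_y (gckv (a0,b0) (a1,b1) (a2,b2) 0%nat) x y = b1 - a2*y/2 + b2*x/2.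
Proof.
  unfold d_y. rewrite (Derive_ext _ (fun t => X0f x t)) by (intro; apply gckv0).
  apply is_derive_unique. unfold X0f. auto_derive; auto. field.
Qed.
Lemma dX1x x y : d_x (gckv (a0,b0) (a1,b1) (a2,b2) 1%nat) x y = - b1 - b2*x/2 + a2*y/2.
Proof.
  unfold d_x. rewrite (Derive_ext _ (fun t => X1f t y)) by (intro; apply gckv1).
  apply is_derive_unique. unfold X1f. auto_derive; auto. field.
Qed.
Lemma dX1y x y : d_y (gckv (a0,b0) (a1,b1) (a2,b2) 1%nat) x y = a1 + b2*y/2 + a2*x/2.
Proof.
  unfold d_y. rewrite (Derive_ext _ (fun t => X1f x t)) by (intro; apply gckv1).
  apply is_derive_unique. unfold X1f. auto_derive; auto. field.
Qed.

Definition Om x y := Omega u0 u1 u2 u3 x y.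
Definition Omx x := u2 + /2*(u0-u1)*x.
Definition Omy y := u3 + /2*(u0-u1)*y.

Lemma dlamx x y : Om x y <> 0 ->
  Derive (fun t => / (Omega u0 u1 u2 u3 t y) ^ 2) x = -2 * Omx x / (Om x y)^3.
Proof.
  intro H. apply is_derive_unique. unfold Om, Omx in *. unfold Omega in *.
  auto_derive. { repeat split; auto. } field. contradict H; lra.
Qed.
Lemma dlamy x y : Om x y <> 0 ->
  Derive (fun t => / (Omega u0 u1 u2 u3 x t) ^ 2) y = -2 * Omy y / (Om x y)^3.
Proof.
  intro H. apply is_derive_unique. unfold Om, Omy in *. unfold Omega in *.
  auto_derive. { repeat split; auto. } field. contradict H; lra.
Qed.

Let X := gckv (a0,b0) (a1,b1) (a2,b2).
Let g := g_u u0 u1 u2 u3.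

Ltac lie_prep H :=
  unfold lie_metric, X, g; simpl pd;
  rewrite ?dX0x, ?dX0y, ?dX1x, ?dX1y, ?gckv0, ?gckv1;
  unfold d_x, d_y, g_u, conf_metric; simpl Nat.eqb; cbv beta iota;
  rewrite ?Derive_const, ?(dlamx _ _ H), ?(dlamy _ _ H);
  unfold Pf, e0f, e1f, e2f, e3f, X0f, X1f, Omx, Omy; unfold Om in *; unfold Omega in *.

Lemma lie00 x y : Om x y <> 0 -> lie_metric X g 0%nat 0%nat x y = -2 * Pf a0 b0 a1 b1 a2 b2 u0 u1 u2 u3 x y / (Om x y)^3.
Proof. intro H. lie_prep H. field. contradict H; lra. Qed.
Lemma lie11 x y : Om x y <> 0 -> lie_metric X g 1%nat 1%nat x y = -2 * Pf a0 b0 a1 b1 a2 b2 u0 u1 u2 u3 x y / (Om x y)^3.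
Proof. intro H. lie_prep H. field. contradict H; lra. Qed.
Lemma lie01 x y : Om x y <> 0 -> lie_metric X g 0%nat 1%nat x y = 0.
Proof. intro H. lie_prep H. field. contradict H; lra. Qed.
Lemma lie10 x y : Om x y <> 0 -> lie_metric X g 1%nat 0%nat x y = 0.
Proof. intro H. lie_prep H. field. contradict H; lra. Qed.

Lemma killing_P : is_killing X g (dom_u u0 u1 u2 u3) <->
  (forall x y, Om x y <> 0 -> Pf a0 b0 a1 b1 a2 b2 u0 u1 u2 u3 x y = 0).
Proof.
  split.
  - intros HK x y Hxy. specialize (HK x y Hxy 0%nat 0%nat ltac:(auto) ltac:(auto)).
    rewrite lie00 in HK by auto.
    assert (H3 : Om x y ^ 3 <> 0) by (apply pow_nonzero; auto).
    unfold Rdiv in HK. apply Rmult_integral in HK. destruct HK as [HK|HK].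
    + lra.
    + exfalso. apply Rinv_neq_0_compat in H3. contradiction.
  - intros HP x y Hxy i j Hi Hj. unfold dom_u in Hxy. fold (Om x y) in Hxy.
    destruct i as [|[|i]]; [| |lia]; destruct j as [|[|j]]; try lia.
    + rewrite lie00, HP by auto. lra.
    + apply lie01; auto.
    + apply lie10; auto.
    + rewrite lie11, HP by auto. lra.
Qed.

Lemma P_to_e : ~(u0=0/\u1=0/\u2=0/\u3=0) ->
  (forall x y, Om x y <> 0 -> Pf a0 b0 a1 b1 a2 b2 u0 u1 u2 u3 x y = 0) ->
  e0f a0 b0 a1 b1 a2 b2 u0 u1 u2 u3 = 0 /\ e1f a0 b0 a1 b1 a2 b2 u0 u1 u2 u3 = 0 /\
  e2f a0 b0 a1 b1 a2 b2 u0 u1 u2 u3 = 0 /\ e3f a0 b0 a1 b1 a2 b2 u0 u1 u2 u3 = 0.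
Proof.
  intros Hu HP.
  assert (Hpt : exists px py, Om px py <> 0).
  { destruct (Req_dec (Om 0 0) 0) as [H00|H00]; [|eauto].
    destruct (Req_dec (Om 1 0) 0) as [H10|H10]; [|eauto].
    destruct (Req_dec (Om (-1) 0) 0) as [Hm10|Hm10]; [|eauto].
    destruct (Req_dec (Om 0 1) 0) as [H01|H01]; [|eauto].
    exfalso. apply Hu. unfold Om, Omega in *. lra. }
  destruct Hpt as [px [py Hp]].
  destruct (nz_nbhd _ px (cont_x u0 u1 u2 u3 px py) Hp) as [ex [Hex Hx]].
  destruct (nz_nbhd _ py (cont_y u0 u1 u2 u3 px py) Hp) as [ey [Hey Hy]].
  set (E0 := e0f a0 b0 a1 b1 a2 b2 u0 u1 u2 u3) in *.
  set (E1 := e1f a0 b0 a1 b1 a2 b2 u0 u1 u2 u3) in *.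
  set (E2 := e2f a0 b0 a1 b1 a2 b2 u0 u1 u2 u3) in *.
  set (E3 := e3f a0 b0 a1 b1 a2 b2 u0 u1 u2 u3) in *.
  assert (HPx : forall t, Rabs (t - px) < ex -> E3*t^2 + E1*t + (E0 + E2*py + E3*py^2) = 0).
  { intros t Ht. specialize (HP t py (Hx t Ht)). unfold Pf in HP. fold E0 E1 E2 E3 in HP. lra. }
  assert (HPy : forall t, Rabs (t - py) < ey -> E3*t^2 + E2*t + (E0 + E1*px + E3*px^2) = 0).
  { intros t Ht. specialize (HP px t (Hy t Ht)). unfold Pf in HP. fold E0 E1 E2 E3 in HP. lra. }
  assert (Ha : Rabs (px - px) < ex) by (rewrite Rminus_diag, Rabs_R0; lra).
  assert (Hb : Rabs (px + ex/2 - px) < ex) by (replace (px + ex/2 - px) with (ex/2) by ring; rewrite Rabs_pos_eq; lra).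
  assert (Hc : Rabs (px - ex/2 - px) < ex) by (replace (px - ex/2 - px) with (-(ex/2)) by ring; rewrite Rabs_Ropp, Rabs_pos_eq; lra).
  destruct (quad3 E3 E1 _ px (ex/2) ltac:(lra) (HPx _ Ha) (HPx _ Hb) (HPx _ Hc)) as [Q3 [Q1 Q0]].
  assert (Ha' : Rabs (py - py) < ey) by (rewrite Rminus_diag, Rabs_R0; lra).
  assert (Hb' : Rabs (py + ey/2 - py) < ey) by (replace (py + ey/2 - py) with (ey/2) by ring; rewrite Rabs_pos_eq; lra).
  assert (Hc' : Rabs (py - ey/2 - py) < ey) by (replace (py - ey/2 - py) with (-(ey/2)) by ring; rewrite Rabs_Ropp, Rabs_pos_eq; lra).
  destruct (quad3 E3 E2 _ py (ey/2) ltac:(lra) (HPy _ Ha') (HPy _ Hb') (HPy _ Hc')) as [_ [Q2 _]].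
  subst E3. rewrite Q3, Q2 in Q0. repeat split; auto; lra.
Qed.
End Ana.

Lemma killing_iff_e a0 b0 a1 b1 a2 b2 u0 u1 u2 u3 : ~(u0=0/\u1=0/\u2=0/\u3=0) ->
  (is_killing (gckv (a0,b0) (a1,b1) (a2,b2)) (g_u u0 u1 u2 u3) (dom_u u0 u1 u2 u3) <->
  e0f a0 b0 a1 b1 a2 b2 u0 u1 u2 u3 = 0 /\ e1f a0 b0 a1 b1 a2 b2 u0 u1 u2 u3 = 0 /\
  e2f a0 b0 a1 b1 a2 b2 u0 u1 u2 u3 = 0 /\ e3f a0 b0 a1 b1 a2 b2 u0 u1 u2 u3 = 0).
Proof.
  intro Hu. rewrite killing_P. split.
  - apply P_to_e; auto.
  - intros [H0 [H1 [H2 H3]]] x y _. unfold Pf. rewrite H0, H1, H2, H3. ring.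
Qed.

Ltac nzt H := repeat split; repeat apply Rmult_integral_contrapositive_currified;
  try (intro Hc; apply H; lra).

Section Curv.
Variables u0 u1 u2 u3 : R.
Let COm x y := Omega u0 u1 u2 u3 x y.
Let COmx x := u2 + /2*(u0-u1)*x.
Let COmy y := u3 + /2*(u0-u1)*y.
Let g := g_u u0 u1 u2 u3.

Lemma dEx i x y : COm x y <> 0 -> d_x (g i i) x y = -2 * COmx x / (COm x y)^3.
Proof.
  intro H. unfold d_x, g, g_u, conf_metric. rewrite Nat.eqb_refl.
  apply is_derive_unique. unfold COm, COmx in *. unfold Omega in *.
  auto_derive. { nzt H. } field. nzt H.
Qed.
Lemma dEy i x y : COm x y <> 0 -> d_y (g i i) x y = -2 * COmy y / (COm x y)^3.
Proof.
  intro H. unfold d_y, g, g_u, conf_metric. rewrite Nat.eqb_refl.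
  apply is_derive_unique. unfold COm, COmy in *. unfold Omega in *.
  auto_derive. { nzt H. } field. nzt H.
Qed.
Lemma dFx x y : d_x (g 0%nat 1%nat) x y = 0.
Proof. unfold d_x, g, g_u, conf_metric. simpl. apply Derive_const. Qed.
Lemma dFy x y : d_y (g 0%nat 1%nat) x y = 0.
Proof. unfold d_y, g, g_u, conf_metric. simpl. apply Derive_const. Qed.
Lemma dFxy x y : d_y (d_x (g 0%nat 1%nat)) x y = 0.
Proof. unfold d_y. rewrite (Derive_ext _ (fun _ => 0)) by (intro; apply dFx). apply Derive_const. Qed.

Lemma dEyy i x y : COm x y <> 0 ->
  d_y (d_y (g i i)) x y = (-(u0-u1) * COm x y + 6 * (COmy y)^2) / (COm x y)^4.
Proof.
  intro H. unfold d_y at 1.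
  destruct (nz_nbhd _ y (cont_y u0 u1 u2 u3 x y) H) as [e [He Hn]].
  rewrite (Derive_ext_loc _ (fun t => -2 * COmy t / (COm x t)^3)).
  2:{ exists (mkposreal e He). intros t Ht. apply dEy. apply Hn. exact Ht. }
  apply is_derive_unique. unfold COm, COmy in *. unfold Omega in *.
  auto_derive. { nzt H. } field. nzt H.
Qed.
Lemma dExx i x y : COm x y <> 0 ->
  d_x (d_x (g i i)) x y = (-(u0-u1) * COm x y + 6 * (COmx x)^2) / (COm x y)^4.
Proof.
  intro H. unfold d_x at 1.
  destruct (nz_nbhd _ x (cont_x u0 u1 u2 u3 x y) H) as [e [He Hn]].
  rewrite (Derive_ext_loc _ (fun t => -2 * COmx t / (COm t y)^3)).
  2:{ exists (mkposreal e He). intros t Ht. apply dEx. apply Hn. exact Ht. }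
  apply is_derive_unique. unfold COm, COmx in *. unfold Omega in *.
  auto_derive. { nzt H. } field. nzt H.
Qed.

Lemma curv_formula x y : COm x y <> 0 ->
  gauss_curvature g x y = u0^2 - u1^2 - u2^2 - u3^2.
Proof.
  intro H. unfold gauss_curvature. cbv zeta.
  rewrite (dEx 0), (dEx 1), (dEy 0), (dEy 1), dFx, dFy, dFxy, (dEyy 0), (dExx 1) by auto.
  replace (g 0%nat 0%nat x y) with (/ (COm x y)^2) by (unfold g, g_u, conf_metric; reflexivity).
  replace (g 1%nat 1%nat x y) with (/ (COm x y)^2) by (unfold g, g_u, conf_metric; reflexivity).
  replace (g 0%nat 1%nat x y) with 0 by (unfold g, g_u, conf_metric; reflexivity).
  unfold COm, COmx, COmy in *. unfold Omega in *. field. contradict H; lra.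
Qed.
End Curv.

Definition UO0 (ar ai br bi gr gi dr di w0 w1 w2 w3 : R) : R :=
  (ai*gi*w2 - ai*gr*w3 + (1/2)*ai^2*w0 - (1/2)*ai^2*w1 + ar*gi*w3 + ar*gr*w2 + (1/2)*ar^2*w0 - (1/2)*ar^2*w1 + bi*di*w2 - bi*dr*w3 + (1/2)*bi^2*w0 - (1/2)*bi^2*w1 + br*di*w3 + br*dr*w2 + (1/2)*br^2*w0 - (1/2)*br^2*w1 + (1/2)*di^2*w0 + (1/2)*di^2*w1 + (1/2)*dr^2*w0 + (1/2)*dr^2*w1 + (1/2)*gi^2*w0 + (1/2)*gi^2*w1 + (1/2)*gr^2*w0 + (1/2)*gr^2*w1).
Definition UO1 (ar ai br bi gr gi dr di w0 w1 w2 w3 : R) : R :=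
  (- ai*gi*w2 + ai*gr*w3 - (1/2)*ai^2*w0 + (1/2)*ai^2*w1 - ar*gi*w3 - ar*gr*w2 - (1/2)*ar^2*w0 + (1/2)*ar^2*w1 + bi*di*w2 - bi*dr*w3 + (1/2)*bi^2*w0 - (1/2)*bi^2*w1 + br*di*w3 + br*dr*w2 + (1/2)*br^2*w0 - (1/2)*br^2*w1 + (1/2)*di^2*w0 + (1/2)*di^2*w1 + (1/2)*dr^2*w0 + (1/2)*dr^2*w1 - (1/2)*gi^2*w0 - (1/2)*gi^2*w1 - (1/2)*gr^2*w0 - (1/2)*gr^2*w1).
Definition UO2 (ar ai br bi gr gi dr di w0 w1 w2 w3 : R) : R :=
  (ai*bi*w0 - ai*bi*w1 + ai*di*w2 - ai*dr*w3 + ar*br*w0 - ar*br*w1 + ar*di*w3 + ar*dr*w2 + bi*gi*w2 - bi*gr*w3 + br*gi*w3 + br*gr*w2 + di*gi*w0 + di*gi*w1 + dr*gr*w0 + dr*gr*w1).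
Definition UO3 (ar ai br bi gr gi dr di w0 w1 w2 w3 : R) : R :=
  (ai*br*w0 - ai*br*w1 + ai*di*w3 + ai*dr*w2 - ar*bi*w0 + ar*bi*w1 - ar*di*w2 + ar*dr*w3 - bi*gi*w3 - bi*gr*w2 + br*gi*w2 - br*gr*w3 - di*gr*w0 - di*gr*w1 + dr*gi*w0 + dr*gi*w1).
Definition m0r (ar ai br bi gr gi dr di qr : R) : R :=
  (- bi^2 + br^2 - (1/4)*di^2*qr + (1/4)*dr^2*qr).
Definition m0i (ar ai br bi gr gi dr di qr : R) : R :=
  (2*bi*br + (1/2)*di*dr*qr).
Definition m1r (ar ai br bi gr gi dr di qr : R) : R :=
  (- 2*ai*bi + 2*ar*br - (1/2)*di*gi*qr + (1/2)*dr*gr*qr).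
Definition m1i (ar ai br bi gr gi dr di qr : R) : R :=
  (2*ai*br + 2*ar*bi + (1/2)*di*gr*qr + (1/2)*dr*gi*qr).
Definition m2r (ar ai br bi gr gi dr di qr : R) : R :=
  (- 2*ai^2 + 2*ar^2 - (1/2)*gi^2*qr + (1/2)*gr^2*qr).
Definition m2i (ar ai br bi gr gi dr di qr : R) : R :=
  (4*ai*ar + gi*gr*qr).
Definition Dr (ar ai br bi gr gi dr di : R) : R :=
  (- ai*di + ar*dr + bi*gi - br*gr).
Definition Di (ar ai br bi gr gi dr di : R) : R :=
  (ai*dr + ar*di - bi*gr - br*gi).
Definition Y0 (ar ai br bi gr gi dr di qr s1 s2 : R) : R :=
  (2*bi*dr*qr*s1 - 2*bi^2*s2 - 2*br*di*qr*s1 - 2*br^2*s2 - (1/2)*di^2*qr*s2 - (1/2)*dr^2*qr*s2).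
Definition Y1 (ar ai br bi gr gi dr di qr s1 s2 : R) : R :=
  (- 2*ai*bi*s2 + ai*dr*qr*s1 - 2*ar*br*s2 - ar*di*qr*s1 + bi*gr*qr*s1 - br*gi*qr*s1 - (1/2)*di*gi*qr*s2 - (1/2)*dr*gr*qr*s2).
Definition Y2 (ar ai br bi gr gi dr di qr s1 s2 : R) : R :=
  (- 2*ai*br*s2 - ai*di*qr*s1 + 2*ar*bi*s2 - ar*dr*qr*s1 + bi*gi*qr*s1 + br*gr*qr*s1 + (1/2)*di*gr*qr*s2 - (1/2)*dr*gi*qr*s2).
Definition Y3 (ar ai br bi gr gi dr di qr s1 s2 : R) : R :=
  ((1/2)*ai*gr*qr*s1 - (1/2)*ai^2*s2 - (1/2)*ar*gi*qr*s1 - (1/2)*ar^2*s2 - (1/8)*gi^2*qr*s2 - (1/8)*gr^2*qr*s2).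
Definition L1 (ar ai br bi gr gi dr di E0 E1 E2 E3 : R) : R :=
  ((1/2)*E0*gi^2 + (1/2)*E0*gr^2 - E1*di*gi - E1*dr*gr + E2*di*gr - E2*dr*gi + 2*E3*di^2 + 2*E3*dr^2).
Definition L2 (ar ai br bi gr gi dr di E0 E1 E2 E3 : R) : R :=
  (- (1/2)*E0*ai*gi - (1/2)*E0*ar*gr + (1/2)*E1*ai*di + (1/2)*E1*ar*dr + (1/2)*E1*bi*gi + (1/2)*E1*br*gr + (1/2)*E2*ai*dr - (1/2)*E2*ar*di - (1/2)*E2*bi*gr + (1/2)*E2*br*gi - 2*E3*bi*di - 2*E3*br*dr).
Definition Q1 (ar ai br bi gr gi dr di qr w0 w1 w2 w3 : R) : R :=
  (2*ai*bi*di*gi*w3 + 2*ai*bi*dr*gr*w3 - 2*ai*br*di*gr*w3 + 2*ai*br*dr*gi*w3 - ai^2*di^2*w3 - ai^2*dr^2*w3 + 2*ar*bi*di*gr*w3 - 2*ar*bi*dr*gi*w3 + 2*ar*br*di*gi*w3 + 2*ar*br*dr*gr*w3 - ar^2*di^2*w3 - ar^2*dr^2*w3 - bi^2*gi^2*w3 - bi^2*gr^2*w3 - br^2*gi^2*w3 - br^2*gr^2*w3).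
Definition c00 (a0 b0 a1 b1 a2 b2 : R) : R :=
  ((1/4)*a0*b1*b2 - (1/4)*a1*b1^2 + (1/4)*a2*b0*b1).
Definition c01 (a0 b0 a1 b1 a2 b2 : R) : R :=
  (- (1/2)*a0*b0*b2 + (1/4)*a0*b2^2 + (1/2)*a1*b0*b1 - (1/4)*a1*b1*b2 + (1/4)*a2*b0*b2 - (1/2)*a2*b0^2).
Definition c02 (a0 b0 a1 b1 a2 b2 : R) : R :=
  ((1/2)*a0*a1*b1 - (1/2)*a0*a2*b0 - (1/4)*a0*a2*b2 - (1/2)*a0^2*b2 + (1/4)*a1*a2*b1 - (1/4)*a2^2*b0).
Definition c03 (a0 b0 a1 b1 a2 b2 : R) : R :=
  (- a0*b1*b2 + a1*b1^2 - a2*b0*b1).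
Definition c10 (a0 b0 a1 b1 a2 b2 : R) : R :=
  ((1/4)*a0*b1*b2 - (1/4)*a1*b1^2 + (1/4)*a2*b0*b1).
Definition c11 (a0 b0 a1 b1 a2 b2 : R) : R :=
  (- (1/2)*a0*b0*b2 - (1/4)*a0*b2^2 + (1/2)*a1*b0*b1 + (1/4)*a1*b1*b2 - (1/4)*a2*b0*b2 - (1/2)*a2*b0^2).
Definition c12 (a0 b0 a1 b1 a2 b2 : R) : R :=
  ((1/2)*a0*a1*b1 - (1/2)*a0*a2*b0 + (1/4)*a0*a2*b2 - (1/2)*a0^2*b2 - (1/4)*a1*a2*b1 + (1/4)*a2^2*b0).
Definition c13 (a0 b0 a1 b1 a2 b2 : R) : R :=
  (a0*b1*b2 - a1*b1^2 + a2*b0*b1).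
Definition c20 (a0 b0 a1 b1 a2 b2 : R) : R :=
  ((1/4)*a0*b2^2 - (1/4)*a1*b1*b2 + (1/4)*a2*b0*b2).
Definition c21 (a0 b0 a1 b1 a2 b2 : R) : R :=
  0.
Definition c22 (a0 b0 a1 b1 a2 b2 : R) : R :=
  (- (1/2)*a0*a1*b2 - (1/2)*a1*a2*b0 + (1/2)*a1^2*b1).
Definition c23 (a0 b0 a1 b1 a2 b2 : R) : R :=
  (- 2*a0*b0*b2 + 2*a1*b0*b1 - 2*a2*b0^2).
Definition c30 (a0 b0 a1 b1 a2 b2 : R) : R :=
  (- (1/4)*a0*a2*b2 + (1/4)*a1*a2*b1 - (1/4)*a2^2*b0).
Definition c31 (a0 b0 a1 b1 a2 b2 : R) : R :=
  ((1/2)*a0*a1*b2 + (1/2)*a1*a2*b0 - (1/2)*a1^2*b1).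
Definition c32 (a0 b0 a1 b1 a2 b2 : R) : R :=
  0.
Definition c33 (a0 b0 a1 b1 a2 b2 : R) : R :=
  (2*a0*a1*b1 - 2*a0*a2*b0 - 2*a0^2*b2).

Definition Nr (a0 b0 a1 b1 a2 b2 gr gi dr di : R) : R :=
  (- a0*gi^2 + a0*gr^2 + a1*di*gi - a1*dr*gr - (1/2)*a2*di^2 + (1/2)*a2*dr^2 - 2*b0*gi*gr + b1*di*gr + b1*dr*gi - b2*di*dr).
Definition Ni (a0 b0 a1 b1 a2 b2 gr gi dr di : R) : R :=
  (2*a0*gi*gr - a1*di*gr - a1*dr*gi + a2*di*dr - b0*gi^2 + b0*gr^2 + b1*di*gi - b1*dr*gr - (1/2)*b2*di^2 + (1/2)*b2*dr^2).
Definition Qi (a0 b0 a1 b1 a2 b2 : R) : R :=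
  (2*a0*b2 - 2*a1*b1 + 2*a2*b0).
Definition Rm0r (a0 b0 a1 b1 a2 b2 gr gi dr di : R) : R :=
  (- (1/2)*di*dr).
Definition Rm0i (a0 b0 a1 b1 a2 b2 gr gi dr di : R) : R :=
  (- (1/4)*di^2 + (1/4)*dr^2).
Definition Rm1r (a0 b0 a1 b1 a2 b2 gr gi dr di : R) : R :=
  (- (1/2)*di*gr - (1/2)*dr*gi).
Definition Rm1i (a0 b0 a1 b1 a2 b2 gr gi dr di : R) : R :=
  (- (1/2)*di*gi + (1/2)*dr*gr).
Definition Rm2r (a0 b0 a1 b1 a2 b2 gr gi dr di : R) : R :=
  (- gi*gr).
Definition Rm2i (a0 b0 a1 b1 a2 b2 gr gi dr di : R) : R :=
  (- (1/2)*gi^2 + (1/2)*gr^2).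

Lemma C2_0 ar ai br bi gr gi dr di qr s1 s2 :
  e0f (m0r ar ai br bi gr gi dr di qr) (m0i ar ai br bi gr gi dr di qr) (m1r ar ai br bi gr gi dr di qr) (m1i ar ai br bi gr gi dr di qr) (m2r ar ai br bi gr gi dr di qr) (m2i ar ai br bi gr gi dr di qr) (UO0 ar ai br bi gr gi dr di (s1*(qr/4+1)) (s1*(qr/4-1)) 0 s2) (UO1 ar ai br bi gr gi dr di (s1*(qr/4+1)) (s1*(qr/4-1)) 0 s2) (UO2 ar ai br bi gr gi dr di (s1*(qr/4+1)) (s1*(qr/4-1)) 0 s2) (UO3 ar ai br bi gr gi dr di (s1*(qr/4+1)) (s1*(qr/4-1)) 0 s2) = Di ar ai br bi gr gi dr di * Y0 ar ai br bi gr gi dr di qr s1 s2.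
Proof. unfold e0f, m0r, m0i, m1r, m1i, m2r, m2i, UO0, UO1, UO2, UO3, Di, Y0. field. Qed.

Lemma C2_1 ar ai br bi gr gi dr di qr s1 s2 :
  e1f (m0r ar ai br bi gr gi dr di qr) (m0i ar ai br bi gr gi dr di qr) (m1r ar ai br bi gr gi dr di qr) (m1i ar ai br bi gr gi dr di qr) (m2r ar ai br bi gr gi dr di qr) (m2i ar ai br bi gr gi dr di qr) (UO0 ar ai br bi gr gi dr di (s1*(qr/4+1)) (s1*(qr/4-1)) 0 s2) (UO1 ar ai br bi gr gi dr di (s1*(qr/4+1)) (s1*(qr/4-1)) 0 s2) (UO2 ar ai br bi gr gi dr di (s1*(qr/4+1)) (s1*(qr/4-1)) 0 s2) (UO3 ar ai br bi gr gi dr di (s1*(qr/4+1)) (s1*(qr/4-1)) 0 s2) = Di ar ai br bi gr gi dr di * Y1 ar ai br bi gr gi dr di qr s1 s2.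
Proof. unfold e1f, m0r, m0i, m1r, m1i, m2r, m2i, UO0, UO1, UO2, UO3, Di, Y1. field. Qed.

Lemma C2_2 ar ai br bi gr gi dr di qr s1 s2 :
  e2f (m0r ar ai br bi gr gi dr di qr) (m0i ar ai br bi gr gi dr di qr) (m1r ar ai br bi gr gi dr di qr) (m1i ar ai br bi gr gi dr di qr) (m2r ar ai br bi gr gi dr di qr) (m2i ar ai br bi gr gi dr di qr) (UO0 ar ai br bi gr gi dr di (s1*(qr/4+1)) (s1*(qr/4-1)) 0 s2) (UO1 ar ai br bi gr gi dr di (s1*(qr/4+1)) (s1*(qr/4-1)) 0 s2) (UO2 ar ai br bi gr gi dr di (s1*(qr/4+1)) (s1*(qr/4-1)) 0 s2) (UO3 ar ai br bi gr gi dr di (s1*(qr/4+1)) (s1*(qr/4-1)) 0 s2) = Di ar ai br bi gr gi dr di * Y2 ar ai br bi gr gi dr di qr s1 s2.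
Proof. unfold e2f, m0r, m0i, m1r, m1i, m2r, m2i, UO0, UO1, UO2, UO3, Di, Y2. field. Qed.

Lemma C2_3 ar ai br bi gr gi dr di qr s1 s2 :
  e3f (m0r ar ai br bi gr gi dr di qr) (m0i ar ai br bi gr gi dr di qr) (m1r ar ai br bi gr gi dr di qr) (m1i ar ai br bi gr gi dr di qr) (m2r ar ai br bi gr gi dr di qr) (m2i ar ai br bi gr gi dr di qr) (UO0 ar ai br bi gr gi dr di (s1*(qr/4+1)) (s1*(qr/4-1)) 0 s2) (UO1 ar ai br bi gr gi dr di (s1*(qr/4+1)) (s1*(qr/4-1)) 0 s2) (UO2 ar ai br bi gr gi dr di (s1*(qr/4+1)) (s1*(qr/4-1)) 0 s2) (UO3 ar ai br bi gr gi dr di (s1*(qr/4+1)) (s1*(qr/4-1)) 0 s2) = Di ar ai br bi gr gi dr di * Y3 ar ai br bi gr gi dr di qr s1 s2.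
Proof. unfold e3f, m0r, m0i, m1r, m1i, m2r, m2i, UO0, UO1, UO2, UO3, Di, Y3. field. Qed.

Lemma C4a ar ai br bi gr gi dr di qr w0 w1 w2 w3 :
  L1 ar ai br bi gr gi dr di (e0f (m0r ar ai br bi gr gi dr di qr) (m0i ar ai br bi gr gi dr di qr) (m1r ar ai br bi gr gi dr di qr) (m1i ar ai br bi gr gi dr di qr) (m2r ar ai br bi gr gi dr di qr) (m2i ar ai br bi gr gi dr di qr) (UO0 ar ai br bi gr gi dr di w0 w1 w2 w3) (UO1 ar ai br bi gr gi dr di w0 w1 w2 w3) (UO2 ar ai br bi gr gi dr di w0 w1 w2 w3) (UO3 ar ai br bi gr gi dr di w0 w1 w2 w3)) (e1f (m0r ar ai br bi gr gi dr di qr) (m0i ar ai br bi gr gi dr di qr) (m1r ar ai br bi gr gi dr di qr) (m1i ar ai br bi gr gi dr di qr) (m2r ar ai br bi gr gi dr di qr) (m2i ar ai br bi gr gi dr di qr) (UO0 ar ai br bi gr gi dr di w0 w1 w2 w3) (UO1 ar ai br bi gr gi dr di w0 w1 w2 w3) (UO2 ar ai br bi gr gi dr di w0 w1 w2 w3) (UO3 ar ai br bi gr gi dr di w0 w1 w2 w3)) (e2f (m0r ar ai br bi gr gi dr di qr) (m0i ar ai br bi gr gi dr di qr) (m1r ar ai br bi gr gi dr di qr) (m1i ar ai br bi gr gi dr di qr) (m2r ar ai br bi gr gi dr di qr) (m2i ar ai br bi gr gi dr di qr) (UO0 ar ai br bi gr gi dr di w0 w1 w2 w3) (UO1 ar ai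 br bi gr gi dr di w0 w1 w2 w3) (UO2 ar ai br bi gr gi dr di w0 w1 w2 w3) (UO3 ar ai br bi gr gi dr di w0 w1 w2 w3)) (e3f (m0r ar ai br bi gr gi dr di qr) (m0i ar ai br bi gr gi dr di qr) (m1r ar ai br bi gr gi dr di qr) (m1i ar ai br bi gr gi dr di qr) (m2r ar ai br bi gr gi dr di qr) (m2i ar ai br bi gr gi dr di qr) (UO0 ar ai br bi gr gi dr di w0 w1 w2 w3) (UO1 ar ai br bi gr gi dr di w0 w1 w2 w3) (UO2 ar ai br bi gr gi dr di w0 w1 w2 w3) (UO3 ar ai br bi gr gi dr di w0 w1 w2 w3)) = (Dr ar ai br bi gr gi dr di^2 + Di ar ai br bi gr gi dr di^2) * Dr ar ai br bi gr gi dr di * (-w2) + Di ar ai br bi gr gi dr di * Q1 ar ai br bi gr gi dr di qr w0 w1 w2 w3.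
Proof. unfold L1, e0f, e1f, e2f, e3f, m0r, m0i, m1r, m1i, m2r, m2i, UO0, UO1, UO2, UO3, Dr, Di, Q1. field. Qed.
Lemma C4b ar ai br bi gr gi dr di qr w0 w1 w2 w3 :
  L2 ar ai br bi gr gi dr di (e0f (m0r ar ai br bi gr gi dr di qr) (m0i ar ai br bi gr gi dr di qr) (m1r ar ai br bi gr gi dr di qr) (m1i ar ai br bi gr gi dr di qr) (m2r ar ai br bi gr gi dr di qr) (m2i ar ai br bi gr gi dr di qr) (UO0 ar ai br bi gr gi dr di w0 w1 w2 w3) (UO1 ar ai br bi gr gi dr di w0 w1 w2 w3) (UO2 ar ai br bi gr gi dr di w0 w1 w2 w3) (UO3 ar ai br bi gr gi dr di w0 w1 w2 w3)) (e1f (m0r ar ai br bi gr gi dr di qr) (m0i ar ai br bi gr gi dr di qr) (m1r ar ai br bi gr gi dr di qr) (m1i ar ai br bi gr gi dr di qr) (m2r ar ai br bi gr gi dr di qr) (m2i ar ai br bi gr gi dr di qr) (UO0 ar ai br bi gr gi dr di w0 w1 w2 w3) (UO1 ar ai br bi gr gi dr di w0 w1 w2 w3) (UO2 ar ai br bi gr gi dr di w0 w1 w2 w3) (UO3 ar ai br bi gr gi dr di w0 w1 w2 w3)) (e2f (m0r ar ai br bi gr gi dr di qr) (m0i ar ai br bi gr gi dr di qr) (m1r ar ai br bi gr gi dr di qr) (m1i ar ai br bi gr gi dr di qr) (m2r ar ai br bi gr gi dr di qr) (m2i ar ai br bi gr gi dr di qr) (UO0 ar ai br bi gr gi dr di w0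 w1 w2 w3) (UO1 ar ai br bi gr gi dr di w0 w1 w2 w3) (UO2 ar ai br bi gr gi dr di w0 w1 w2 w3) (UO3 ar ai br bi gr gi dr di w0 w1 w2 w3)) (e3f (m0r ar ai br bi gr gi dr di qr) (m0i ar ai br bi gr gi dr di qr) (m1r ar ai br bi gr gi dr di qr) (m1i ar ai br bi gr gi dr di qr) (m2r ar ai br bi gr gi dr di qr) (m2i ar ai br bi gr gi dr di qr) (UO0 ar ai br bi gr gi dr di w0 w1 w2 w3) (UO1 ar ai br bi gr gi dr di w0 w1 w2 w3) (UO2 ar ai br bi gr gi dr di w0 w1 w2 w3) (UO3 ar ai br bi gr gi dr di w0 w1 w2 w3)) = (Dr ar ai br bi gr gi dr di^2 + Di ar ai br bi gr gi dr di^2) * Dr ar ai br bi gr gi dr di * (/2*((w0-w1)*qr/4 - (w0+w1))).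
Proof. unfold L2, e0f, e1f, e2f, e3f, m0r, m0i, m1r, m1i, m2r, m2i, UO0, UO1, UO2, UO3, Dr, Di. field. Qed.

Lemma C3_0 ar ai br bi gr gi dr di u0 u1 u2 u3 :
  UO0 ar ai br bi gr gi dr di (UO0 dr di (-br) (-bi) (-gr) (-gi) ar ai u0 u1 u2 u3) (UO1 dr di (-br) (-bi) (-gr) (-gi) ar ai u0 u1 u2 u3) (UO2 dr di (-br) (-bi) (-gr) (-gi) ar ai u0 u1 u2 u3) (UO3 dr di (-br) (-bi) (-gr) (-gi) ar ai u0 u1 u2 u3) = (Dr ar ai br bi gr gi dr di^2 + Di ar ai br bi gr gi dr di^2) * u0.
Proof. unfold UO0, UO1, UO2, UO3, Dr, Di. field. Qed.

Lemma C3_1 ar ai br bi gr gi dr di u0 u1 u2 u3 :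
  UO1 ar ai br bi gr gi dr di (UO0 dr di (-br) (-bi) (-gr) (-gi) ar ai u0 u1 u2 u3) (UO1 dr di (-br) (-bi) (-gr) (-gi) ar ai u0 u1 u2 u3) (UO2 dr di (-br) (-bi) (-gr) (-gi) ar ai u0 u1 u2 u3) (UO3 dr di (-br) (-bi) (-gr) (-gi) ar ai u0 u1 u2 u3) = (Dr ar ai br bi gr gi dr di^2 + Di ar ai br bi gr gi dr di^2) * u1.
Proof. unfold UO0, UO1, UO2, UO3, Dr, Di. field. Qed.

Lemma C3_2 ar ai br bi gr gi dr di u0 u1 u2 u3 :
  UO2 ar ai br bi gr gi dr di (UO0 dr di (-br) (-bi) (-gr) (-gi) ar ai u0 u1 u2 u3) (UO1 dr di (-br) (-bi) (-gr) (-gi) ar ai u0 u1 u2 u3) (UO2 dr di (-br) (-bi) (-gr) (-gi) ar ai u0 u1 u2 u3) (UO3 dr di (-br) (-bi) (-gr) (-gi) ar ai u0 u1 u2 u3) = (Dr ar ai br bi gr gi dr di^2 + Di ar ai br bi gr gi dr di^2) * u2.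
Proof. unfold UO0, UO1, UO2, UO3, Dr, Di. field. Qed.

Lemma C3_3 ar ai br bi gr gi dr di u0 u1 u2 u3 :
  UO3 ar ai br bi gr gi dr di (UO0 dr di (-br) (-bi) (-gr) (-gi) ar ai u0 u1 u2 u3) (UO1 dr di (-br) (-bi) (-gr) (-gi) ar ai u0 u1 u2 u3) (UO2 dr di (-br) (-bi) (-gr) (-gi) ar ai u0 u1 u2 u3) (UO3 dr di (-br) (-bi) (-gr) (-gi) ar ai u0 u1 u2 u3) = (Dr ar ai br bi gr gi dr di^2 + Di ar ai br bi gr gi dr di^2) * u3.
Proof. unfold UO0, UO1, UO2, UO3, Dr, Di. field. Qed.

Lemma C5 ar ai br bi gr gi dr di w0 w1 w2 w3 :
  let u := fun i => match i with 0%nat => UO0 ar ai br bi gr gi dr di w0 w1 w2 w3 | 1%nat => UO1 ar ai br bi gr gi dr di w0 w1 w2 w3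
     | 2%nat => UO2 ar ai br bi gr gi dr di w0 w1 w2 w3 | _ => UO3 ar ai br bi gr gi dr di w0 w1 w2 w3 end in
  (u 0%nat)^2 - (u 1%nat)^2 - (u 2%nat)^2 - (u 3%nat)^2 = (Dr ar ai br bi gr gi dr di^2 + Di ar ai br bi gr gi dr di^2) * (w0^2 - w1^2 - w2^2 - w3^2).
Proof. simpl. unfold UO0, UO1, UO2, UO3, Dr, Di. field. Qed.

Lemma P1_0 a0 b0 a1 b1 a2 b2 u0 u1 u2 u3 :
  (2*(a0*b2+b0*a2) - 2*a1*b1)^2 / 8 * u0 = c00 a0 b0 a1 b1 a2 b2 * e0f a0 b0 a1 b1 a2 b2 u0 u1 u2 u3 + c01 a0 b0 a1 b1 a2 b2 * e1f a0 b0 a1 b1 a2 b2 u0 u1 u2 u3 + c02 a0 b0 a1 b1 a2 b2 * e2f a0 b0 a1 b1 a2 b2 u0 u1 u2 u3 + c03 a0 b0 a1 b1 a2 b2 * e3f a0 b0 a1 b1 a2 b2 u0 u1 u2 u3.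
Proof. unfold c00, c01, c02, c03, e0f, e1f, e2f, e3f. field. Qed.

Lemma P1_1 a0 b0 a1 b1 a2 b2 u0 u1 u2 u3 :
  (2*(a0*b2+b0*a2) - 2*a1*b1)^2 / 8 * u1 = c10 a0 b0 a1 b1 a2 b2 * e0f a0 b0 a1 b1 a2 b2 u0 u1 u2 u3 + c11 a0 b0 a1 b1 a2 b2 * e1f a0 b0 a1 b1 a2 b2 u0 u1 u2 u3 + c12 a0 b0 a1 b1 a2 b2 * e2f a0 b0 a1 b1 a2 b2 u0 u1 u2 u3 + c13 a0 b0 a1 b1 a2 b2 * e3f a0 b0 a1 b1 a2 b2 u0 u1 u2 u3.
Proof. unfold c10, c11, c12, c13, e0f, e1f, e2f, e3f. field. Qed.

Lemma P1_2 a0 b0 a1 b1 a2 b2 u0 u1 u2 u3 :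
  (2*(a0*b2+b0*a2) - 2*a1*b1)^2 / 8 * u2 = c20 a0 b0 a1 b1 a2 b2 * e0f a0 b0 a1 b1 a2 b2 u0 u1 u2 u3 + c21 a0 b0 a1 b1 a2 b2 * e1f a0 b0 a1 b1 a2 b2 u0 u1 u2 u3 + c22 a0 b0 a1 b1 a2 b2 * e2f a0 b0 a1 b1 a2 b2 u0 u1 u2 u3 + c23 a0 b0 a1 b1 a2 b2 * e3f a0 b0 a1 b1 a2 b2 u0 u1 u2 u3.
Proof. unfold c20, c21, c22, c23, e0f, e1f, e2f, e3f. field. Qed.

Lemma P1_3 a0 b0 a1 b1 a2 b2 u0 u1 u2 u3 :
  (2*(a0*b2+b0*a2) - 2*a1*b1)^2 / 8 * u3 = c30 a0 b0 a1 b1 a2 b2 * e0f a0 b0 a1 b1 a2 b2 u0 u1 u2 u3 + c31 a0 b0 a1 b1 a2 b2 * e1f a0 b0 a1 b1 a2 b2 u0 u1 u2 u3 + c32 a0 b0 a1 b1 a2 b2 * e2f a0 b0 a1 b1 a2 b2 u0 u1 u2 u3 + c33 a0 b0 a1 b1 a2 b2 * e3f a0 b0 a1 b1 a2 b2 u0 u1 u2 u3.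
Proof. unfold c30, c31, c32, c33, e0f, e1f, e2f, e3f. field. Qed.



Lemma RtoC_eq_iff (a b : R) : RtoC a = RtoC b <-> a = b.
Proof. split; [intro H; apply (f_equal fst) in H; exact H | intros ->; reflexivity]. Qed.

Lemma OAT_re ar ai br bi gr gi dr di (v : nat -> C) w0 w1 w2 w3 :
  v 0%nat = RtoC w0 -> v 1%nat = RtoC w1 -> v 2%nat = RtoC w2 -> v 3%nat = RtoC w3 ->
  OAT_apply (ar,ai) (br,bi) (gr,gi) (dr,di) v 0%nat = RtoC (UO0 ar ai br bi gr gi dr di w0 w1 w2 w3) /\
  OAT_apply (ar,ai) (br,bi) (gr,gi) (dr,di) v 1%nat = RtoC (UO1 ar ai br bi gr gi dr di w0 w1 w2 w3) /\
  OAT_apply (ar,ai) (br,bi) (gr,gi) (dr,di) v 2%nat = RtoC (UO2 ar ai br bi gr gi dr di w0 w1 w2 w3) /\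
  OAT_apply (ar,ai) (br,bi) (gr,gi) (dr,di) v 3%nat = RtoC (UO3 ar ai br bi gr gi dr di w0 w1 w2 w3).
Proof.
  intros H0 H1 H2 H3. unfold OAT_apply. rewrite H0, H1, H2, H3.
  unfold UO0, UO1, UO2, UO3.
  repeat split; apply injective_projections; simpl; field.
Qed.

Lemma rep_iff ar ai br bi gr gi dr di qr u0 u1 u2 u3 s1 s2 :
  (let v (j : nat) : C :=
           match j with
           | 0 => (RtoC s1 * (/ 4 * (qr, 0) + 1))%C
           | 1 => (RtoC s1 * (/ 4 * (qr, 0) - 1))%C
           | 2 => RtoC 0
           | _ => RtoC s2
           end in
         RtoC u0 = OAT_apply (ar,ai) (br,bi) (gr,gi) (dr,di) v 0 /\
         RtoC u1 = OAT_apply (ar,ai) (br,bi) (gr,gi) (dr,di) v 1 /\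
         RtoC u2 = OAT_apply (ar,ai) (br,bi) (gr,gi) (dr,di) v 2 /\
         RtoC u3 = OAT_apply (ar,ai) (br,bi) (gr,gi) (dr,di) v 3) <->
  (u0 = UO0 ar ai br bi gr gi dr di (s1*(qr/4+1)) (s1*(qr/4-1)) 0 s2 /\
   u1 = UO1 ar ai br bi gr gi dr di (s1*(qr/4+1)) (s1*(qr/4-1)) 0 s2 /\
   u2 = UO2 ar ai br bi gr gi dr di (s1*(qr/4+1)) (s1*(qr/4-1)) 0 s2 /\
   u3 = UO3 ar ai br bi gr gi dr di (s1*(qr/4+1)) (s1*(qr/4-1)) 0 s2).
Proof.
  cbv zeta.
  destruct (OAT_re ar ai br bi gr gi dr di
    (fun j : nat => match j with
           | 0 => (RtoC s1 * (/ 4 * (qr, 0) + 1))%C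
           | 1 => (RtoC s1 * (/ 4 * (qr, 0) - 1))%C
           | 2 => RtoC 0
           | _ => RtoC s2
           end) (s1*(qr/4+1)) (s1*(qr/4-1)) 0 s2) as [E0 [E1 [E2 E3]]].
  1-4: apply injective_projections; simpl; field.
  rewrite E0, E1, E2, E3, !RtoC_eq_iff. tauto.
Qed.

Lemma L1_0 ar ai br bi gr gi dr di : L1 ar ai br bi gr gi dr di 0 0 0 0 = 0.
Proof. unfold L1. ring. Qed.
Lemma L2_0 ar ai br bi gr gi dr di : L2 ar ai br bi gr gi dr di 0 0 0 0 = 0.
Proof. unfold L2. ring. Qed.

Theorem theorem9p1 (mu0 mu1 mu2 : C) :
  (* xi_{mu} is not identically zero *)
  ~ (forall (k : nat) (x y : R), gckv mu0 mu1 mu2 k x y = 0) ->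
  let q := (2 * mu0 * mu2 - mu1 * mu1)%C in
  (* case q not real: U is empty *)
  (Im q <> 0 ->
     forall u0 u1 u2 u3 : R, ~ (u0 = 0 /\ u1 = 0 /\ u2 = 0 /\ u3 = 0) ->
       ~ is_killing (gckv mu0 mu1 mu2) (g_u u0 u1 u2 u3) (dom_u u0 u1 u2 u3))
  /\
  (* case q real *)
  (Im q = 0 ->
     forall gam del : C,
       (/ 2 * (del * del) * mu2 - gam * del * mu1 + gam * gam * mu0 = 1)%C ->
       let alp := (/ 2 * (del * mu2 - gam * mu1))%C in
       let bet := (/ 2 * del * mu1 - gam * mu0)%C in
       let rep (u0 u1 u2 u3 s1 s2 : R) : Prop :=
         let v (j : nat) : C :=
           match j with
           | 0 => (RtoC s1 * (/ 4 * q + 1))%C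
           | 1 => (RtoC s1 * (/ 4 * q - 1))%C
           | 2 => RtoC 0
           | _ => RtoC s2
           end in
         RtoC u0 = OAT_apply alp bet gam del v 0 /\
         RtoC u1 = OAT_apply alp bet gam del v 1 /\
         RtoC u2 = OAT_apply alp bet gam del v 2 /\
         RtoC u3 = OAT_apply alp bet gam del v 3 in
       forall u0 u1 u2 u3 : R, ~ (u0 = 0 /\ u1 = 0 /\ u2 = 0 /\ u3 = 0) ->
         (is_killing (gckv mu0 mu1 mu2) (g_u u0 u1 u2 u3) (dom_u u0 u1 u2 u3) <->
            exists s1 s2 : R, ~ (s1 = 0 /\ s2 = 0) /\ rep u0 u1 u2 u3 s1 s2)
         /\
         (forall s1 s2 : R, ~ (s1 = 0 /\ s2 = 0) -> rep u0 u1 u2 u3 s1 s2 ->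
            forall x y : R, dom_u u0 u1 u2 u3 x y ->
              gauss_curvature (g_u u0 u1 u2 u3) x y = s1 ^ 2 * Re q - s2 ^ 2)).
Proof.
  destruct mu0 as [a0 b0], mu1 as [a1 b1], mu2 as [a2 b2].
  intros Hnz q.
  assert (Hq : q = (2 * (a0,b0) * (a2,b2) - (a1,b1) * (a1,b1))%C) by reflexivity.
  clearbody q. destruct q as [qr qi].
  assert (Hqr : qr = 2*(a0*a2 - b0*b2) - (a1*a1 - b1*b1)).
  { apply (f_equal fst) in Hq. simpl in Hq. rewrite Hq. ring. }
  assert (Hqi' : qi = Qi a0 b0 a1 b1 a2 b2).
  { apply (f_equal snd) in Hq. simpl in Hq. rewrite Hq. unfold Qi. ring. }
  clear Hq.
  split.
  - intros Hqi u0 u1 u2 u3 Hu HK. simpl in Hqi.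
    apply (killing_iff_e a0 b0 a1 b1 a2 b2 u0 u1 u2 u3 Hu) in HK.
    destruct HK as [H0 [H1 [H2 H3]]].
    apply Hu.
    assert (Hd : (2*(a0*b2+b0*a2) - 2*a1*b1)^2 / 8 <> 0).
    { assert (Hne : 2*(a0*b2+b0*a2) - 2*a1*b1 <> 0).
      { rewrite Hqi' in Hqi. unfold Qi in Hqi. intro Hc. apply Hqi. lra. }
      unfold Rdiv. apply Rmult_integral_contrapositive_currified.
      - apply pow_nonzero. exact Hne.
      - apply Rinv_neq_0_compat. lra. }
    pose proof (P1_0 a0 b0 a1 b1 a2 b2 u0 u1 u2 u3) as X0.
    pose proof (P1_1 a0 b0 a1 b1 a2 b2 u0 u1 u2 u3) as X1.
    pose proof (P1_2 a0 b0 a1 b1 a2 b2 u0 u1 u2 u3) as X2.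
    pose proof (P1_3 a0 b0 a1 b1 a2 b2 u0 u1 u2 u3) as X3.
    rewrite H0, H1, H2, H3, !Rmult_0_r, !Rplus_0_r in X0, X1, X2, X3.
    repeat split.
    + apply Rmult_integral in X0. destruct X0; [contradiction|assumption].
    + apply Rmult_integral in X1. destruct X1; [contradiction|assumption].
    + apply Rmult_integral in X2. destruct X2; [contradiction|assumption].
    + apply Rmult_integral in X3. destruct X3; [contradiction|assumption].
  - intros Hqi [gr gi] [dr di] HN alp bet rep u0 u1 u2 u3 Hu. simpl in Hqi.
    assert (HQi0 : Qi a0 b0 a1 b1 a2 b2 = 0) by (rewrite <- Hqi'; exact Hqi). clear Hqi'. subst qi.
    assert (HNr : Nr a0 b0 a1 b1 a2 b2 gr gi dr di = 1).
    { generalize (f_equal fst HN). simpl. intro H. unfold Nr. etransitivity; [| exact H]. field. }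
    assert (HNi : Ni a0 b0 a1 b1 a2 b2 gr gi dr di = 0).
    { generalize (f_equal snd HN). simpl. intro H. unfold Ni. etransitivity; [| exact H]. field. }
    clear HN.
    assert (Hal : alp = (/ 2 * ((dr,di) * (a2,b2) - (gr,gi) * (a1,b1)))%C) by reflexivity.
    assert (Hbe : bet = (/ 2 * (dr,di) * (a1,b1) - (gr,gi) * (a0,b0))%C) by reflexivity.
    clearbody alp bet.
    destruct alp as [ar ai], bet as [br bi].
    assert (Har : ar = /2*(dr*a2 - di*b2 - (gr*a1 - gi*b1))).
    { generalize (f_equal fst Hal). simpl. intro H. rewrite H. field. }
    assert (Hai : ai = /2*(dr*b2 + di*a2 - (gr*b1 + gi*a1))).
    { generalize (f_equal snd Hal). simpl. intro H. rewrite H. field. }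
    assert (Hbr : br = /2*(dr*a1 - di*b1) - (gr*a0 - gi*b0)).
    { generalize (f_equal fst Hbe). simpl. intro H. rewrite H. field. }
    assert (Hbi : bi = /2*(dr*b1 + di*a1) - (gr*b0 + gi*a0)).
    { generalize (f_equal snd Hbe). simpl. intro H. rewrite H. field. }
    clear Hal Hbe.
    assert (HDr : Dr ar ai br bi gr gi dr di = 1).
    { rewrite <- HNr. rewrite Har, Hai, Hbr, Hbi. unfold Dr, Nr. field. }
    assert (HDi : Di ar ai br bi gr gi dr di = 0).
    { rewrite <- HNi. rewrite Har, Hai, Hbr, Hbi. unfold Di, Ni. field. }
    assert (Hm0r : a0 = m0r ar ai br bi gr gi dr di qr).
    { rewrite Har, Hai, Hbr, Hbi, Hqr.
      transitivity (a0 * Nr a0 b0 a1 b1 a2 b2 gr gi dr di - b0 * Ni a0 b0 a1 b1 a2 b2 gr gi dr di - Qi a0 b0 a1 b1 a2 b2 * Rm0r a0 b0 a1 b1 a2 b2 gr gi dr di).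
      { rewrite HNr, HNi, HQi0. ring. }
      unfold Nr, Ni, Qi, Rm0r, m0r. field. }
    assert (Hm0i : b0 = m0i ar ai br bi gr gi dr di qr).
    { rewrite Har, Hai, Hbr, Hbi, Hqr.
      transitivity (a0 * Ni a0 b0 a1 b1 a2 b2 gr gi dr di + b0 * Nr a0 b0 a1 b1 a2 b2 gr gi dr di - Qi a0 b0 a1 b1 a2 b2 * Rm0i a0 b0 a1 b1 a2 b2 gr gi dr di).
      { rewrite HNr, HNi, HQi0. ring. }
      unfold Nr, Ni, Qi, Rm0i, m0i. field. }
    assert (Hm1r : a1 = m1r ar ai br bi gr gi dr di qr).
    { rewrite Har, Hai, Hbr, Hbi, Hqr.
      transitivity (a1 * Nr a0 b0 a1 b1 a2 b2 gr gi dr di - b1 * Ni a0 b0 a1 b1 a2 b2 gr gi dr di - Qi a0 b0 a1 b1 a2 b2 * Rm1r a0 b0 a1 b1 a2 b2 gr gi dr di).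
      { rewrite HNr, HNi, HQi0. ring. }
      unfold Nr, Ni, Qi, Rm1r, m1r. field. }
    assert (Hm1i : b1 = m1i ar ai br bi gr gi dr di qr).
    { rewrite Har, Hai, Hbr, Hbi, Hqr.
      transitivity (a1 * Ni a0 b0 a1 b1 a2 b2 gr gi dr di + b1 * Nr a0 b0 a1 b1 a2 b2 gr gi dr di - Qi a0 b0 a1 b1 a2 b2 * Rm1i a0 b0 a1 b1 a2 b2 gr gi dr di).
      { rewrite HNr, HNi, HQi0. ring. }
      unfold Nr, Ni, Qi, Rm1i, m1i. field. }
    assert (Hm2r : a2 = m2r ar ai br bi gr gi dr di qr).
    { rewrite Har, Hai, Hbr, Hbi, Hqr.
      transitivity (a2 * Nr a0 b0 a1 b1 a2 b2 gr gi dr di - b2 * Ni a0 b0 a1 b1 a2 b2 gr gi dr di - Qi a0 b0 a1 b1 a2 b2 * Rm2r a0 b0 a1 b1 a2 b2 gr gi dr di).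
      { rewrite HNr, HNi, HQi0. ring. }
      unfold Nr, Ni, Qi, Rm2r, m2r. field. }
    assert (Hm2i : b2 = m2i ar ai br bi gr gi dr di qr).
    { rewrite Har, Hai, Hbr, Hbi, Hqr.
      transitivity (a2 * Ni a0 b0 a1 b1 a2 b2 gr gi dr di + b2 * Nr a0 b0 a1 b1 a2 b2 gr gi dr di - Qi a0 b0 a1 b1 a2 b2 * Rm2i a0 b0 a1 b1 a2 b2 gr gi dr di).
      { rewrite HNr, HNi, HQi0. ring. }
      unfold Nr, Ni, Qi, Rm2i, m2i. field. }
    clear Har Hai Hbr Hbi Hqr HNr HNi HQi0.
    subst a0 b0 a1 b1 a2 b2.
    assert (HD2 : Dr ar ai br bi gr gi dr di ^2 + Di ar ai br bi gr gi dr di ^2 = 1) by (rewrite HDr, HDi; ring).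
    split.
    + split.
      * intro HK. apply (killing_iff_e (m0r ar ai br bi gr gi dr di qr) (m0i ar ai br bi gr gi dr di qr) (m1r ar ai br bi gr gi dr di qr) (m1i ar ai br bi gr gi dr di qr) (m2r ar ai br bi gr gi dr di qr) (m2i ar ai br bi gr gi dr di qr) u0 u1 u2 u3 Hu) in HK.
        destruct HK as [E0 [E1 [E2 E3]]].
        set (w0 := UO0 dr di (-br) (-bi) (-gr) (-gi) ar ai u0 u1 u2 u3).
        set (w1 := UO1 dr di (-br) (-bi) (-gr) (-gi) ar ai u0 u1 u2 u3).
        set (w2 := UO2 dr di (-br) (-bi) (-gr) (-gi) ar ai u0 u1 u2 u3).
        set (w3 := UO3 dr di (-br) (-bi) (-gr) (-gi) ar ai u0 u1 u2 u3).
        assert (Hu0 : u0 = UO0 ar ai br bi gr gi dr di w0 w1 w2 w3) by (unfold w0, w1, w2, w3; rewrite C3_0, HD2; ring).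
        assert (Hu1 : u1 = UO1 ar ai br bi gr gi dr di w0 w1 w2 w3) by (unfold w0, w1, w2, w3; rewrite C3_1, HD2; ring).
        assert (Hu2 : u2 = UO2 ar ai br bi gr gi dr di w0 w1 w2 w3) by (unfold w0, w1, w2, w3; rewrite C3_2, HD2; ring).
        assert (Hu3 : u3 = UO3 ar ai br bi gr gi dr di w0 w1 w2 w3) by (unfold w0, w1, w2, w3; rewrite C3_3, HD2; ring).
        clearbody w0 w1 w2 w3. subst u0 u1 u2 u3.
        pose proof (C4a ar ai br bi gr gi dr di qr w0 w1 w2 w3) as X1.
        pose proof (C4b ar ai br bi gr gi dr di qr w0 w1 w2 w3) as X2.
        rewrite E0, E1, E2, E3, L1_0, HDr, HDi in X1.
        rewrite E0, E1, E2, E3, L2_0, HDr, HDi in X2.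
        assert (Hw2 : w2 = 0) by lra.
        assert (Hl2 : (w0 - w1) * qr / 4 - (w0 + w1) = 0) by lra.
        exists ((w0 - w1)/2), w3. split.
        -- intros [Hs1 Hs2]. apply Hu.
           assert (Hw0 : w0 = 0) by nra. assert (Hw1 : w1 = 0) by nra.
           rewrite Hw0, Hw1, Hw2, Hs2. unfold UO0, UO1, UO2, UO3. repeat split; ring.
        -- apply (proj2 (rep_iff ar ai br bi gr gi dr di qr _ _ _ _ ((w0 - w1)/2) w3)).
           assert (Hv0 : (w0 - w1)/2 * (qr/4+1) = w0) by lra.
           assert (Hv1 : (w0 - w1)/2 * (qr/4-1) = w1) by lra.
           rewrite Hv0, Hv1, Hw2. repeat split; reflexivity.
      * intros [s1 [s2 [Hs Hrep]]].
        apply (proj1 (rep_iff ar ai br bi gr gi dr di qr u0 u1 u2 u3 s1 s2)) in Hrep.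
        destruct Hrep as [Hu0 [Hu1 [Hu2 Hu3]]]. subst u0 u1 u2 u3.
        apply (killing_iff_e (m0r ar ai br bi gr gi dr di qr) (m0i ar ai br bi gr gi dr di qr) (m1r ar ai br bi gr gi dr di qr) (m1i ar ai br bi gr gi dr di qr) (m2r ar ai br bi gr gi dr di qr) (m2i ar ai br bi gr gi dr di qr) _ _ _ _ Hu).
        rewrite C2_0, C2_1, C2_2, C2_3, HDi. repeat split; ring.
    + intros s1 s2 Hs Hrep x y Hxy.
      apply (proj1 (rep_iff ar ai br bi gr gi dr di qr u0 u1 u2 u3 s1 s2)) in Hrep.
      destruct Hrep as [Hu0 [Hu1 [Hu2 Hu3]]].
      rewrite curv_formula by exact Hxy.
      pose proof (C5 ar ai br bi gr gi dr di (s1*(qr/4+1)) (s1*(qr/4-1)) 0 s2) as X. cbv beta iota zeta in X.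
      rewrite Hu0, Hu1, Hu2, Hu3, X, HD2. simpl Re. field.
Qed.
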